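(* Let $N\ge 1$ and $k\ge 1$ be integers, let $q^{(k)}_1,\ldots,q^{(k)}_{N^k}\in\Delta^{N}$ be arbitrary, and let $\mathcal{Q}^{(k)}:=\left(q^{(k)}_1,\ldots,q^{(k)}_{N^k}\right)$. For $i\in\{1,\ldots,N^{k-1}\}$ set $$Q^{(k)}_i:=\left(q^{(k)}_{N(i-1)+1},\,q^{(k)}_{N(i-1)+2},\,\ldots,\,q^{(k)}_{N(i-1)+N}\right)\in\mathbb{R}^{N\times N},$$ and let $$Q^{(k)}:=C_{N,N^{k-1}}\sum_{i=1}^{N^{k-1}}E_{N^{k-1},i}\otimes Q^{(k)}_i\in\mathbb{R}^{N^k\times N^k}$$ be the corresponding $k^{\text{th}}$ order transition matrix. Then $$Q^{(k)}=M^{(k)}_{k}\,C^{(k+1)}_{1}\,B^{(k)}_{k}\left(\mathcal{Q}^{(k)}\right)=C^{(k)}_{1}\,M^{(k)}_{k-1}\,B^{(k)}_{k}\left(\mathcal{Q}^{(k)}\right).$$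
   Context: $\Delta^{n}$ denotes the set of probability vectors in $\mathbb{R}^n$ (column vectors with nonnegative entries summing to $1$). $E_n$ is the $n\times n$ identity matrix, $e_{n,i}$ the $i$-th standard basis column vector of $\mathbb{R}^n$, $E_{n,i}:=e_{n,i}e_{n,i}^{T}$, $\mathbf{1}_n\in\mathbb{R}^n$ the all-ones vector, and $\otimes$ the Kronecker product. The commutation matrix is $C_{n,m}:=\sum_{i=1}^{m}e_{m,i}^{T}\otimes E_n\otimes e_{m,i}$ (an $nm\times nm$ permutation matrix). For integers $k\ge 0$ and $0\le m\le k$ (with $N$ fixed): the marginalization matrix is $M^{(k)}_m:=E_{N^m}\otimes\mathbf{1}_N^{T}\otimes E_{N^{k-m}}\in\mathbb{R}^{N^k\times N^{k+1}}$; for a tuple $\mathcal{Q}=(q_1,\ldots,q_{N^k})$ of vectors in $\Delta^N$, the branching matrix is $B^{(k)}_m(\mathcal{Q}):=\sum_{i=1}^{N^m}\sum_{j=1}^{N^{k-m}}E_{N^m,i}\otimes q_{N^{k-m}(i-1)+j}\otimes E_{N^{k-m},j}\in\mathbb{R}^{N^{k+1}\times N^k}$; the cycling matrix is $C^{(k)}_m:=C_{N^m,N^{k-m}}$. *)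

(* Defs.v *)
(* Kronecker product = tensmx (A *t B) from mathcomp real_closed mxtens,
   the standard row-major Kronecker product. *)
From mathcomp Require Import all_boot all_order all_algebra.
From mathcomp Require Import mxtens.
Set Implicit Arguments. Unset Strict Implicit. Unset Printing Implicit Defensive.
Import Order.TTheory GRing.Theory Num.Theory.
Local Open Scope ring_scope.

Notation "A *t B" := (tensmx A B)
  (at level 40, left associativity, format "A  *t  B") : ring_scope.

Lemma dimC_eq1 n m : (1 * n * m = n * m)%N. Proof. by rewrite mul1n. Qed.
Lemma dimC_eq2 n m : (m * n * 1 = n * m)%N. Proof. by rewrite muln1 mulnC. Qed.
Lemma dim_pow_split (N m k : nat) : (m <= k)%N -> (N ^ m * N ^ (k - m) = N ^ k)%N.
Proof. by move=> h; rewrite -expnD subnKC. Qed.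
Lemma dimM_eq1 (N m k : nat) : (m <= k)%N -> (N ^ m * 1 * N ^ (k - m) = N ^ k)%N.
Proof. by move=> h; rewrite muln1 dim_pow_split. Qed.
Lemma dimM_eq2 (N m k : nat) : (m <= k)%N -> (N ^ m * N * N ^ (k - m) = N ^ k.+1)%N.
Proof. by move=> h; rewrite -expnSr -expnD addSn subnKC. Qed.
Lemma dimQ_eq1 (N k : nat) : (0 < k)%N -> (N ^ k.-1 * N = N ^ k)%N.
Proof. by case: k => // k _; rewrite expnSr. Qed.

Section Defs.
Variable R : realFieldType.

Definition probvec (n : nat) (q : 'cV[R]_n) : Prop :=
  (forall i, 0 <= q i 0) /\ \sum_i q i 0 = 1.

Definition basis_col (n : nat) (i : 'I_n) : 'cV[R]_n := delta_mx i 0.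
Definition basis_mx (n : nat) (i : 'I_n) : 'M[R]_n := basis_col i *m (basis_col i)^T.

Definition commmx (n m : nat) : 'M[R]_(n * m) :=
  castmx (dimC_eq1 n m, dimC_eq2 n m)
    (\sum_(i < m) ((basis_col i)^T *t (1%:M : 'M[R]_n) *t basis_col i)).

Variable N : nat.

Definition margmx (k m : nat) (h : (m <= k)%N) : 'M[R]_(N ^ k, N ^ k.+1) :=
  castmx (dimM_eq1 N h, dimM_eq2 N h)
    ((1%:M : 'M[R]_(N ^ m)) *t (const_mx 1 : 'rV[R]_N) *t (1%:M : 'M[R]_(N ^ (k - m)))).

(* branching matrix B^{(k)}_m(Q) =
   sum_{i<N^m} sum_{j<N^{k-m}} E_{N^m,i} (x) q_{N^{k-m} i + j} (x) E_{N^{k-m},j}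
   (0-based; the tensor index (i,j) has value i * N^{k-m} + j) *)
Definition branchmx (k m : nat) (h : (m <= k)%N) (Q : 'I_(N ^ k) -> 'cV[R]_N)
  : 'M[R]_(N ^ k.+1, N ^ k) :=
  castmx (dimM_eq2 N h, dimM_eq1 N h)
    (\sum_(i < N ^ m) \sum_(j < N ^ (k - m))
       (basis_mx i *t Q (cast_ord (dim_pow_split N h) (mxtens_index (i, j)))
          *t basis_mx j)).

Definition cycmx (k m : nat) (h : (m <= k)%N) : 'M[R]_(N ^ k) :=
  castmx (dim_pow_split N h, dim_pow_split N h) (commmx (N ^ m) (N ^ (k - m))).

(* Q^{(k)}_i = (q_{N i}, ..., q_{N i + N - 1}) (0-based), an N x N matrix whose
   j-th column is q_{N i + j}; the tensor index (i, j) has value i * N + j *)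
Definition blockQ (k : nat) (hk : (0 < k)%N) (Q : 'I_(N ^ k) -> 'cV[R]_N)
  (i : 'I_(N ^ k.-1)) : 'M[R]_N :=
  \matrix_(r < N, c < N) Q (cast_ord (dimQ_eq1 N hk) (mxtens_index (i, c))) r 0.

Definition transmx (k : nat) (hk : (0 < k)%N) (Q : 'I_(N ^ k) -> 'cV[R]_N)
  : 'M[R]_(N ^ k) :=
  castmx (etrans (mulnC _ _) (dimQ_eq1 N hk), etrans (mulnC _ _) (dimQ_eq1 N hk))
    (commmx N (N ^ k.-1))
  *m castmx (dimQ_eq1 N hk, dimQ_eq1 N hk)
       (\sum_(i < N ^ k.-1) (basis_mx i *t blockQ hk Q i)).

End Defs.

(* Main.v *)
Require Import Defs.
From mathcomp Require Import all_boot all_order all_algebra.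
From mathcomp Require Import mxtens.
Import GRing.Theory Num.Theory.
Set Implicit Arguments. Unset Strict Implicit. Unset Printing Implicit Defensive.
Local Open Scope ring_scope.

Section S.
Variable R : realFieldType.

Lemma divmod_eqb (x d a b : nat) : (b < d)%N ->
  ((x %/ d == a) && (x %% d == b))%N = (x == a * d + b)%N.
Proof.
move=> hb; apply/andP/eqP => [[/eqP <- /eqP <-]|->]; first by rewrite -divn_eq.
have d0 : (0 < d)%N by apply: leq_ltn_trans hb.
by rewrite divnMDl // divn_small // addn0 modnMDl modn_small.
Qed.

Lemma sum_ind n (v : nat) (hv : (v < n)%N) (F : 'I_n -> R) :
  \sum_(x < n) ((val x == v)%:R * F x) = F (Ordinal hv).
Proof.
rewrite (bigD1 (Ordinal hv)) //= eqxx mul1r big1 ?addr0 // => x hx.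
have -> : (val x == v) = false.
  by apply/negbTE; apply: contra hx => /eqP e; apply/eqP/val_inj.
by rewrite mul0r.
Qed.

Lemma basis_mxE n (i a b : 'I_n) : basis_mx R i a b = ((a == i) && (b == i))%:R.
Proof.
rewrite /basis_mx /basis_col !mxE big_ord1 !mxE.
by case: (a == i); case: (b == i); rewrite /= ?mulr1 ?mulr0 ?mul0r.
Qed.

Lemma natr_andb (a b : bool) : ((a && b)%:R : R) = a%:R * b%:R.
Proof. by case: a; case: b; rewrite /= ?mulr1 ?mulr0 ?mul0r. Qed.

Lemma commmxE n m (i j : 'I_(n * m)) :
  commmx R n m i j = ((i %/ m == j %% n) && (i %% m == j %/ n))%N%:R.
Proof.
rewrite /commmx castmxE summxE.
under eq_bigr => s _ do rewrite !mxE -!val_eqE /= divn1 modn1 !andbT.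
have hi : (i %/ m < n)%N by exact: (mxtens_index_proof1 (m:=n) i).
have hj : (j %/ n < m)%N by rewrite mulnC in j *; exact: (mxtens_index_proof1 (m:=m) (n:=n) j).
rewrite (divn_small hi) (modn_small hi).
rewrite (bigD1 (Ordinal hj)) //= eqxx big1 ?addr0.
  by rewrite !eqxx !mul1r natr_andb mulrC.
move=> s hs; rewrite eqxx andbT; have -> : (j %/ n == s)%N = false.
  by apply/negbTE; apply: contra hs => /eqP e; apply/eqP/val_inj.
by rewrite !mul0r.
Qed.
Lemma sum_ind2 n v (hv : (v < n)%N) (F : 'I_n -> R) :
  (forall x : 'I_n, (val x != v) -> F x = 0) -> \sum_x F x = F (Ordinal hv).
Proof.
move=> H; rewrite (bigD1 (Ordinal hv)) //= big1 ?addr0 // => x hx.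

Qed.

Variable N : nat.

Definition qv k (Q : 'I_(N ^ k) -> 'cV[R]_N) (j : 'I_(N ^ k)) (t : nat) : R :=
  \sum_(r < N) (val r == t)%:R * Q j r 0.

Lemma qvE k (Q : 'I_(N ^ k) -> 'cV[R]_N) j (r : 'I_N) : Q j r 0 = qv Q j r.
Proof.
rewrite /qv (sum_ind2 (ltn_ord r)) /=; last first.
  by move=> x /negbTE ->; rewrite mul0r.
rewrite eqxx mul1r; congr (Q _ _ _); exact: val_inj.
Qed.

Lemma margmxE k m (h : (m <= k)%N) (i : 'I_(N ^ k)) (j : 'I_(N ^ k.+1)) :
  margmx R N h i j = ((i %/ N ^ (k - m) == j %/ N ^ (k - m) %/ N)
     && (i %% N ^ (k - m) == j %% N ^ (k - m)))%N%:R.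
Proof.
rewrite /margmx castmxE !mxE -!val_eqE /=.
by rewrite divn1 mulr1 natr_andb.
Qed.

Lemma branchmxE k m (h : (m <= k)%N) Q (i : 'I_(N ^ k.+1)) (j : 'I_(N ^ k)) :
  branchmx h Q i j = ((i %/ N ^ (k - m) %/ N == j %/ N ^ (k - m))
     && (i %% N ^ (k - m) == j %% N ^ (k - m)))%N%:R * qv Q j (i %/ N ^ (k - m) %% N).
Proof.
rewrite /branchmx castmxE summxE.
under eq_bigr => a _ do (rewrite summxE; under eq_bigr => b _ do rewrite mxE /= basis_mxE mxE /= basis_mxE -!val_eqE /= ord1 qvE).
have hj1 := mxtens_index_proof1 (cast_ord (esym (dim_pow_split N h)) j).
have hj2 := mxtens_index_proof2 (cast_ord (esym (dim_pow_split N h)) j).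
rewrite /= in hj1 hj2.
rewrite (sum_ind2 hj1); last first.
  move=> a ha; apply: big1 => b _; rewrite divn1.
  have e : (j %/ N ^ (k - m) == a)%N = false by rewrite eq_sym; exact: negbTE ha.
  by rewrite e andbF !mul0r.
rewrite (sum_ind2 hj2); last first.
  move=> b hb.
  have e : (j %% N ^ (k - m) == b)%N = false by rewrite eq_sym; exact: negbTE hb.
  by rewrite e andbF mulr0.
rewrite /= divn1 !eqxx !andbT.
have -> : cast_ord (dim_pow_split N h) (mxtens_index (Ordinal hj1, Ordinal hj2)) = j.
  by apply: val_inj => /=; rewrite -divn_eq.
by rewrite natr_andb mulrAC.
Qed.

Lemma cycmxE k m (h : (m <= k)%N) (i j : 'I_(N ^ k)) :
  cycmx R N h i j = ((i %/ N ^ (k - m) == j %% N ^ m)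
     && (i %% N ^ (k - m) == j %/ N ^ m))%N%:R.
Proof. by rewrite /cycmx castmxE commmxE. Qed.

Lemma lt_mxidx a b p q : (a < p)%N -> (b < q)%N -> (a * q + b < p * q)%N.
Proof. by move=> ha hb; exact: (mxtens_index_proof (Ordinal ha, Ordinal hb)). Qed.

Lemma commS k (hk : (0 < k)%N) (hN : (0 < N)%N) (Q : 'I_(N ^ k) -> 'cV[R]_N)
  (A F : 'M[R]_(N ^ k)) (i j : 'I_(N ^ k)) :
  (forall x, A i x = ((i %/ N ^ k.-1 == x %% N) && (i %% N ^ k.-1 == x %/ N))%N%:R) ->
  (forall x, F x j = (x %/ N == j %/ N)%N%:R * qv Q j (x %% N)) ->
  (A *m F) i j = (i %% N ^ k.-1 == j %/ N)%N%:R * qv Q j (i %/ N ^ k.-1).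
Proof.
move=> HA HF; rewrite mxE.
set P := (N ^ k.-1)%N.
have hP : (0 < P)%N by rewrite expn_gt0 hN.
have hiP : (i %/ P < N)%N by rewrite ltn_divLR // mulnC /P dimQ_eq1.
have hv : ((i %% P) * N + i %/ P < N ^ k)%N.
  apply: leq_trans (lt_mxidx _ hiP) _; first exact: ltn_pmod.
  by rewrite /P dimQ_eq1.
have E : forall x : nat, ((i %/ P == x %% N) && (i %% P == x %/ N))%N
    = (x == (i %% P) * N + i %/ P)%N.
  by move=> x; rewrite andbC eq_sym (eq_sym (i %/ P)%N) divmod_eqb.
rewrite (sum_ind2 hv); last first.
  by move=> x hx; rewrite HA E (negbTE hx) mul0r.
rewrite HA HF E /= eqxx mul1r.
have := divmod_eqb ((i %% P) * N + i %/ P) (i %% P) hiP; rewrite eqxx.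
by case/andP => /eqP -> /eqP ->.
Qed.

Lemma transmxE k (hk : (0 < k)%N) (hN : (0 < N)%N) (Q : 'I_(N ^ k) -> 'cV[R]_N)
  (i j : 'I_(N ^ k)) :
  transmx hk Q i j = (i %% N ^ k.-1 == j %/ N)%N%:R * qv Q j (i %/ N ^ k.-1).
Proof.
rewrite /transmx; apply: commS => // [x|x]; first by rewrite castmxE commmxE.
rewrite castmxE summxE.
under eq_bigr => a _ do rewrite mxE /= basis_mxE mxE -!val_eqE /= qvE.
have hj1 := mxtens_index_proof1 (cast_ord (esym (dimQ_eq1 N hk)) j).
rewrite /= in hj1.
rewrite (sum_ind2 hj1); last first.
  move=> a ha.
  have e : (j %/ N == a)%N = false by rewrite eq_sym; exact: negbTE ha.
  by rewrite e andbF !mul0r.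
rewrite /= eqxx andbT.
have -> : cast_ord (dimQ_eq1 N hk) (mxtens_index (Ordinal hj1,
    Ordinal (mxtens_index_proof2 (cast_ord (esym (dimQ_eq1 N hk)) j)))) = j.
  by apply: val_inj => /=; rewrite -divn_eq.
done.
Qed.

Lemma keyE (x i j P M : nat) : (0 < P)%N -> (0 < M)%N -> (j < P * M)%N ->
  ((x %/ M == i) && (x %% (P * M) == j))%N
  = ((i %% P == j %/ M) && (x == i %/ P * (P * M) + j))%N.
Proof.
move=> hP hM hj.
have hjM : (j %/ M < P)%N by rewrite ltn_divLR.
apply/andP/andP => [[/eqP hx /eqP hxm]|[/eqP hi /eqP ->]].
  have ex : (x = (x %/ (P * M)) * P * M + j)%N by rewrite -mulnA -hxm -divn_eq.
  have ei : (i = (x %/ (P * M)) * P + j %/ M)%N.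
    by rewrite -hx {1}ex divnMDl.
  have e1 : (i %% P = j %/ M)%N by rewrite ei modnMDl modn_small.
  have e2 : (i %/ P = x %/ (P * M))%N by rewrite ei divnMDl // (divn_small hjM) addn0.
  rewrite e1 e2 eqxx; split => //; apply/eqP; by rewrite {1}ex mulnA.
split; apply/eqP; last by rewrite modnMDl modn_small.
by rewrite mulnA divnMDl // -hi -divn_eq.
Qed.

Lemma CBE k (hN : (0 < N)%N) (Q : 'I_(N ^ k) -> 'cV[R]_N) (x : 'I_(N ^ k.+1))
  (j : 'I_(N ^ k)) :
  (cycmx R N (ltn0Sn k) *m branchmx (leqnn k) Q) x j
  = (x %% N ^ k == j)%N%:R * qv Q j (x %/ N ^ k).
Proof.
rewrite mxE.
under eq_bigr => y _ do rewrite cycmxE branchmxE subnn expn0 subn1 /= expn1 !divn1 !modn1 eqxx andbT.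
have hNk : (0 < N ^ k)%N by rewrite expn_gt0 hN.
have hx : (x %/ N ^ k < N)%N by rewrite ltn_divLR // -expnS.
have hv : ((x %% N ^ k) * N + x %/ N ^ k < N ^ k.+1)%N.
  by apply: leq_trans (lt_mxidx (ltn_pmod x hNk) hx) _; rewrite expnSr.
have E : forall y : nat, ((x %/ N ^ k == y %% N) && (x %% N ^ k == y %/ N))%N
    = (y == (x %% N ^ k) * N + x %/ N ^ k)%N.
  by move=> y; rewrite andbC eq_sym (eq_sym (x %/ N ^ k)%N) divmod_eqb.
rewrite (sum_ind2 hv); last first.
  by move=> y hy; rewrite E (negbTE hy) mul0r.
rewrite E /= eqxx mul1r.
have := divmod_eqb ((x %% N ^ k) * N + x %/ N ^ k) (x %% N ^ k) hx; rewrite eqxx.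
by case/andP => /eqP -> /eqP ->.
Qed.

Lemma MBE k (hk : (0 < k)%N) (hN : (0 < N)%N) (Q : 'I_(N ^ k) -> 'cV[R]_N)
  (x j : 'I_(N ^ k)) :
  (margmx R N (leq_pred k) *m branchmx (leqnn k) Q) x j
  = (x %/ N == j %/ N)%N%:R * qv Q j (x %% N).
Proof.
have e1 : (k - k.-1 = 1)%N by case: k hk {Q x j} => [//|k] _ /=; rewrite subSnn.
rewrite mxE.
under eq_bigr => y _ do rewrite margmxE branchmxE e1 subnn expn0 expn1 !divn1 !modn1 eqxx andbT.
have hv : (j * N + x %% N < N ^ k.+1)%N.
  by rewrite expnSr; apply: lt_mxidx => //; rewrite ltn_pmod.
have E : forall y : nat, ((y %/ N == j) && (y %% N == x %% N))%N
    = (y == j * N + x %% N)%N.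
  by move=> y; rewrite divmod_eqb // ltn_pmod.
rewrite (sum_ind2 hv); last first.
  move=> y hy; move: (E y); rewrite (negbTE hy).
  case e: (y %/ N == j)%N; last by rewrite mul0r mulr0.
  by rewrite andTb => hm; rewrite (eq_sym (x %% N)%N) hm andbF mul0r.
have := E (j * N + x %% N)%N; rewrite eqxx => /andP[/eqP e2 /eqP e3].
by rewrite /= e2 e3 eqxx andbT eqxx mul1r.
Qed.


Theorem main_entry (hN : (0 < N)%N) k (hk : (0 < k)%N)
  (Q : 'I_(N ^ k) -> 'cV[R]_N) :
  transmx hk Q
    = margmx R N (leqnn k) *m cycmx R N (ltn0Sn k) *m branchmx (leqnn k) Q
  /\ transmx hk Q
    = cycmx R N hk *m margmx R N (leq_pred k) *m branchmx (leqnn k) Q.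
Proof.
have hNk : (0 < N ^ k)%N by rewrite expn_gt0 hN.
have hP : (0 < N ^ k.-1)%N by rewrite expn_gt0 hN.
split; apply/matrixP => i j; rewrite -mulmxA transmxE //.
  rewrite mxE.
  under eq_bigr => x _ do rewrite CBE // margmxE subnn expn0 !divn1 !modn1 eqxx andbT.
  have hiP : (i %/ N ^ k.-1 < N)%N by rewrite ltn_divLR // mulnC dimQ_eq1.
  have Hk : (N ^ k = N ^ k.-1 * N)%N by rewrite dimQ_eq1.
  have E : forall x : nat, ((x %/ N == i) && (x %% N ^ k == j))%N
     = ((i %% N ^ k.-1 == j %/ N) && (x == i %/ N ^ k.-1 * N ^ k + j))%N.
    move=> x; have := ltn_ord j; move: (nat_of_ord i) (nat_of_ord j) => i1 j1.
    by rewrite Hk => hj1; rewrite keyE.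
  case: (boolP (i %% N ^ k.-1 == j %/ N)%N) => hc.
    have hv : (i %/ N ^ k.-1 * N ^ k + j < N ^ k.+1)%N.
      by rewrite expnS; apply: lt_mxidx.
    rewrite (sum_ind2 hv); last first.
      move=> x hx; move: (E x); rewrite hc (negbTE hx) /=.
      case e: (x %% N ^ k == j)%N; last by rewrite mul0r mulr0.
      by rewrite andbT => hm; rewrite eq_sym hm mul0r.
    have := E (i %/ N ^ k.-1 * N ^ k + j)%N; rewrite hc eqxx => /andP[/eqP e2 /eqP e3].
    rewrite /= e2 e3 !eqxx divnMDl // (divn_small (ltn_ord j)) addn0.
    by rewrite !mul1r.
  rewrite mul0r big1 // => x _.
  move: (E x); rewrite (negbTE hc) /=.
  case e: (x %% N ^ k == j)%N; last by rewrite mul0r mulr0.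
  by rewrite andbT => hm; rewrite eq_sym hm mul0r.
symmetry; apply: commS => // x; first by rewrite cycmxE subn1 expn1.
exact: MBE.
Qed.
End S.

Unset Implicit Arguments.

Theorem proposition1 (R : realFieldType) (N k : nat) (hN : (0 < N)%N) (hk : (0 < k)%N)
  (Q : 'I_(N ^ k) -> 'cV[R]_N) (hQ : forall i, probvec (Q i)) :
  transmx hk Q
    = margmx R N (leqnn k) *m cycmx R N (ltn0Sn k) *m branchmx (leqnn k) Q
  /\ transmx hk Q
    = cycmx R N hk *m margmx R N (leq_pred k) *m branchmx (leqnn k) Q.
Proof. exact: (@main_entry R N hN k hk Q). Qed.
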